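(* $K_4$ is strongly $4$-edge-orientable.
   Context: An orientation of a graph $H$ is any digraph obtained by replacing each edge $uv$ with the arc $(u,v)$, with the arc $(v,u)$, or with both arcs. A kernel of a digraph $D$ is an independent set $S$ such that every vertex of $D-S$ has an out-neighbor in $S$. $D$ is kernel-perfect if every induced subdigraph of $D$ has a kernel. For $f:V(H)\to\mathbb{N}$, an orientation $D$ of $H$ is $f$-kernel-perfect if it is kernel-perfect and $f(v)\ge 1+d^+_D(v)$ for all $v$. For $f:E(G)\to\mathbb{N}$, $G$ is $f$-edge-orientable if its line graph $L(G)$ admits an $f$-kernel-perfect orientation. For $v\in V(G)$, define $f_{k,v}:E(G)\to\mathbb{N}$ by $f_{k,v}(e)=d_G(v)$ if $e$ is incident to $v$, and $f_{k,v}(e)=k$ otherwise. $G$ is strongly $k$-edge-orientable if $G$ is $f_{k,v}$-edge-orientable for every $v\in V(G)$. *)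

(* Defs.v *)
From mathcomp Require Import all_boot.
Set Implicit Arguments. Unset Strict Implicit. Unset Printing Implicit Defensive.

Definition simple_graph (V : finType) (adj : rel V) : Prop :=
  irreflexive adj /\ symmetric adj.

Definition is_edge (V : finType) (adj : rel V) (e : {set V}) : bool :=
  [exists x, exists y, adj x y && (e == [set x; y])].

Notation edge adj := {e : {set _} | is_edge adj e}.

Definition line_adj (V : finType) (adj : rel V) : rel (edge adj) :=
  fun e f => (e != f) && (val e :&: val f != set0).

Definition orientation (T : finType) (adjH : rel T) (a : rel T) : Prop :=
  (forall u v, a u v -> adjH u v) /\ (forall u v, adjH u v -> a u v || a v u).

Definition kernel_of (T : finType) (a : rel T) (S K : {set T}) : Prop :=
  K \subset S /\
  (forall x y, x \in K -> y \in K -> ~~ a x y) /\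
  (forall x, x \in S :\: K -> exists2 y, y \in K & a x y).

Definition kernel_perfect (T : finType) (a : rel T) : Prop :=
  forall S : {set T}, exists K : {set T}, kernel_of a S K.

Definition outdeg (T : finType) (a : rel T) (v : T) : nat := #|[set w | a v w]|.

Definition f_kernel_perfect_orientation (T : finType) (adjH : rel T)
  (f : T -> nat) (a : rel T) : Prop :=
  orientation adjH a /\ kernel_perfect a /\ (forall v, 1 + outdeg a v <= f v).

Definition f_edge_orientable (V : finType) (adj : rel V) (f : edge adj -> nat) : Prop :=
  exists a : rel (edge adj), f_kernel_perfect_orientation (@line_adj V adj) f a.

Definition degree (V : finType) (adj : rel V) (v : V) : nat := #|[set w | adj v w]|.

Definition f_kv (V : finType) (adj : rel V) (k : nat) (v : V) : edge adj -> nat :=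
  fun e => if v \in val e then degree adj v else k.

Definition strongly_edge_orientable (V : finType) (adj : rel V) (k : nat) : Prop :=
  forall v : V, @f_edge_orientable V adj (@f_kv V adj k v).

Definition K4_adj : rel 'I_4 := fun x y => x != y.

(* Main.v *)
Require Import Defs.
From mathcomp Require Import all_boot.
Set Implicit Arguments. Unset Strict Implicit. Unset Printing Implicit Defensive.

Definition Atab : seq (seq (seq bool)) := [:: [:: [:: false; true; true; false; false; false]; [:: false; false; true; false; false; true]; [:: false; false; false; false; false; false]; [:: true; true; false; false; false; true]; [:: true; false; true; true; false; false]; [:: false; false; true; true; true; false]];
 [:: [:: false; false; false; true; true; false]; [:: true; false; false; true; false; true]; [:: true; true; false; false; true; false]; [:: false; false; false; false; true; true]; [:: false; false; false; false; false; false]; [:: false; true; true; false; true; false]];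
 [:: [:: false; true; true; true; false; false]; [:: false; false; true; false; false; true]; [:: true; false; false; false; true; true]; [:: false; true; false; false; false; true]; [:: true; false; false; true; false; true]; [:: false; false; false; false; false; false]];
 [:: [:: false; false; true; true; true; false]; [:: true; false; true; true; false; false]; [:: false; false; false; false; false; false]; [:: false; true; false; false; true; true]; [:: false; false; true; false; false; true]; [:: false; true; true; false; false; false]]].
Definition epl := [:: (0,1);(0,2);(0,3);(1,2);(1,3);(2,3)].
Definition ep i := nth (0,1) epl i.
Definition memb (x : nat) i := (x == (ep i).1) || (x == (ep i).2).
Definition share i j := memb (ep i).1 j || memb (ep i).2 j.
Definition Lc i j := (i != j) && share i j.
Definition A (v i j : nat) : bool := nth false (nth [::] (nth [::] Atab v) i) j.
Definition outc v i := count (A v i) (iota 0 6).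
Definition orient_ok v := all (fun i => all (fun j => (A v i j ==> Lc i j) && (Lc i j ==> A v i j || A v j i)) (iota 0 6)) (iota 0 6).
Definition deg_ok v := all (fun i => 1 + outc v i <= (if memb v i then 3 else 4)) (iota 0 6).
Definition kcheck v s k := all (fun i => (nth false k i ==> nth false s i) && all (fun j => nth false k i && nth false k j ==> ~~ A v i j) (iota 0 6) && (nth false s i && ~~ nth false k i ==> has (fun j => nth false k j && A v i j) (iota 0 6))) (iota 0 6).
Fixpoint allbits n : seq (seq bool) := if n is m.+1 then [seq b :: l | b <- [:: false; true], l <- allbits m] else [:: [::]].
Definition kp_ok v := all (fun s => has (kcheck v s) (allbits 6)) (allbits 6).
Lemma all_ok : all (fun v => orient_ok v && deg_ok v && kp_ok v) (iota 0 4). Proof. vm_compute. reflexivity. Qed.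

Lemma mem_allbits l : l \in allbits (size l).
Proof.
elim: l => [|b l IH] //=.
have inj (c : bool) : injective (@cons bool c) by move=> ? ? [].
case: b => /=; rewrite !mem_cat.
- by apply/orP; right; apply/orP; left; apply/mapP; exists l.
- by apply/orP; left; apply/mapP; exists l.
Qed.

Lemma ord4_cases (P : 'I_4 -> Prop) : P (@Ordinal 4 0 isT) -> P (@Ordinal 4 1 isT) ->
  P (@Ordinal 4 2 isT) -> P (@Ordinal 4 3 isT) -> forall x, P x.
Proof.
move=> H0 H1 H2 H3 [[|[|[|[|n]]]] Hn];
  try by rewrite (bool_irrelevance Hn isT).
by [].
Qed.

Definition o (n : nat) : 'I_4 := inord n.
Definition ed_set i : {set 'I_4} := [set o (ep i).1; o (ep i).2].

Lemma ep_lt i : ((ep i).1 < 4) && ((ep i).2 < 4) && ((ep i).1 != (ep i).2).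
Proof. rewrite /ep; do 6 (case: i => [|i]; first by []); by rewrite nth_default. Qed.

Lemma oK n : n < 4 -> val (o n) = n.
Proof. by move=> h; apply: inordK. Qed.

Lemma pair_edge (x y : 'I_4) : x != y -> is_edge K4_adj [set x; y].
Proof. move=> Hxy; apply/existsP; exists x; apply/existsP; exists y; by rewrite /K4_adj /= Hxy eqxx. Qed.

Lemma ed_ok i : is_edge K4_adj (ed_set i).
Proof.
apply: pair_edge. case/andP: (ep_lt i) => /andP [h1 h2] h3.
by rewrite -val_eqE /= !oK.
Qed.

Definition ed i : edge K4_adj := exist _ (ed_set i) (ed_ok i).

Definition idxn (S : {set 'I_4}) : nat :=
  if o 0 \in S then (if o 1 \in S then 0 else if o 2 \in S then 1 else 2)
  else if o 1 \in S then (if o 2 \in S then 3 else 4) else 5.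
Definition idx (e : edge K4_adj) := idxn (val e).

Lemma in_ed (x : 'I_4) i : (x \in ed_set i) = memb x i.
Proof.
rewrite !in_set2 /memb. case/andP: (ep_lt i) => /andP [h1 h2] _.
by rewrite -!val_eqE /= !oK.
Qed.

Lemma in_ed_o n i : n < 4 -> (o n \in ed_set i) = memb n i.
Proof. by move=> h; rewrite in_ed oK. Qed.

Lemma idx_ed i : i < 6 -> idx (ed i) = i.
Proof. rewrite /idx /idxn /= !in_ed_o //. by do 6 (case: i => [|i] //). Qed.

Lemma idx_lt e : idx e < 6.
Proof. rewrite /idx /idxn; by repeat case: ifP. Qed.

Lemma eq_o_l n (x : 'I_4) : n < 4 -> (o n == x) = (n == val x).
Proof. by move=> h; rewrite -val_eqE /= oK. Qed.

Lemma ed_idx e : ed (idx e) = e.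
Proof.
case: e => S HS. apply: val_inj; rewrite /idx /=.
move: (HS) => /existsP [x /existsP [y /andP [Hxy /eqP eS]]].
rewrite eS. clear eS HS S. move: Hxy.
elim/ord4_cases: x; elim/ord4_cases: y => //= _;
  rewrite /idxn !in_set2 !eq_o_l //=;
  apply/setP => z; elim/ord4_cases: z; by rewrite in_ed in_set2.
Qed.

Lemma ed_inj i j : i < 6 -> j < 6 -> (ed i == ed j) = (i == j).
Proof.
move=> hi hj; apply/eqP/eqP => [H|->//].
by rewrite -(idx_ed hi) H idx_ed.
Qed.

Lemma line_adj_idx e f : line_adj e f = Lc (idx e) (idx f).
Proof.
rewrite -{1}(ed_idx e) -{1}(ed_idx f).
have := idx_lt e; have := idx_lt f.
move: (idx e) (idx f) => i j hj hi.
rewrite /line_adj /Lc ed_inj //=. congr andb.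
apply/set0Pn/idP => [[x]|].
- rewrite in_setI !in_ed => /andP [mi mj]; rewrite /share.
  by case/orP: mi => /eqP <-; rewrite mj ?orbT.
- case/andP: (ep_lt i) => /andP [h1 h2] _.
  case/orP => H; [exists (o (ep i).1) | exists (o (ep i).2)];
  by rewrite in_setI !in_ed !oK // H /memb eqxx ?orbT.
Qed.

Definition a (v : nat) : rel (edge K4_adj) := fun e f => A v (idx e) (idx f).

Lemma iotaP (P : pred nat) i : all P (iota 0 6) -> i < 6 -> P i.
Proof. by move/allP => H hi; apply: H; rewrite mem_iota. Qed.

Lemma kp v : kp_ok v -> kernel_perfect (a v).
Proof.
move=> H S.
pose bs := map (fun i => ed i \in S) (iota 0 6).
have hbs : bs \in allbits 6 by have := mem_allbits bs; rewrite size_map size_iota.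
have := allP H bs hbs => /hasP [k _ hk].
have hnth i : i < 6 -> nth false bs i = (ed i \in S).
  by move=> hi; rewrite (nth_map 0) ?size_iota // nth_iota.
exists [set e | nth false k (idx e)].
split; [|split].
- apply/subsetP => e; rewrite inE => ke.
  have /andP [/andP [h1 _] _] := iotaP hk (idx_lt e).
  by move: (implyP h1 ke); rewrite hnth ?idx_lt // ed_idx.
- move=> x y; rewrite !inE => kx ky.
  have /andP [/andP [_ h2] _] := iotaP hk (idx_lt x).
  by have := iotaP h2 (idx_lt y); rewrite kx ky.
- move=> x; rewrite !inE => /andP [nk xS].
  have /andP [_ h3] := iotaP hk (idx_lt x).
  have := implyP h3; rewrite hnth ?idx_lt // ed_idx xS nk.
  move=> /(_ isT) /hasP [j].
  rewrite mem_iota => /andP [_ hj] /andP [kj aj].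
  by exists (ed j); rewrite /a ?inE idx_ed.
Qed.

Lemma card_idx (P : pred nat) : #|[set w : edge K4_adj | P (idx w)]| = count P (iota 0 6).
Proof.
have -> : [set w : edge K4_adj | P (idx w)] = (fun i : 'I_6 => ed i) @: [set i : 'I_6 | P i].
  apply/setP => w; apply/idP/imsetP => [|[i]]; rewrite inE.
  - by move=> Pw; exists (Ordinal (idx_lt w)); rewrite ?inE // ed_idx.
  - by rewrite inE => Pi ->; rewrite idx_ed.
rewrite card_imset; last by move=> i j /eqP; rewrite ed_inj // => /eqP; apply: val_inj.
by rewrite cardsE cardE /enum_mem size_filter -enumT -val_enum_ord count_map.
Qed.

Theorem mainTheorem14 : strongly_edge_orientable K4_adj 4.
Proof.
move=> v.
have hv : val v \in iota 0 4 by rewrite mem_iota /=.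
have /andP [/andP [ho hd] hk] := allP all_ok (val v) hv.
exists (a v); split; [|split].
- split => e f.
  + move=> h; rewrite line_adj_idx.
    have := iotaP (iotaP ho (idx_lt e)) (idx_lt f).
    by rewrite /a in h; rewrite h /= => /andP [-> _].
  + rewrite line_adj_idx => h.
    have := iotaP (iotaP ho (idx_lt e)) (idx_lt f).
    by rewrite h /= => /andP [_ ->].
- exact: kp.
- move=> e. rewrite /outdeg /f_kv /a card_idx.
  have -> : v \in val e = memb v (idx e) by rewrite -{1}(ed_idx e) /= in_ed.
  have -> : degree K4_adj v = 3.
    rewrite /degree.
    have -> : [set w | K4_adj v w] = [set~ v] by apply/setP => w; rewrite !inE eq_sym.
    by rewrite cardsC1 card_ord.
  exact: iotaP hd (idx_lt e).
Qed.
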